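(* For any integers $r\ge t\ge 2$, there exists a connected graph $G$ such that $\mathrm{gp}(G)=r$ and $\omega(G_{\rm SR})=t$.
   Context: All graphs are finite and simple. For a connected graph $G$, a set $S\subseteq V(G)$ is a general position set if no three pairwise distinct vertices of $S$ lie on a common geodesic (shortest path); $\mathrm{gp}(G)$ is the maximum cardinality of a general position set. A vertex $u$ is maximally distant from $v$ if every neighbor $w$ of $u$ satisfies $d_G(v,w)\le d_G(u,v)$; $u,v$ are mutually maximally distant (MMD) if each is maximally distant from the other. The strong resolving graph $G_{\rm SR}$ has vertex set $V(G)$, distinct vertices adjacent iff MMD in $G$. $\omega$ is the clique number. *)

(* Defs.v *)
From mathcomp Require Import all_boot.
Set Implicit Arguments. Unset Strict Implicit. Unset Printing Implicit Defensive.

Definition simple_graph (T : finType) (e : rel T) : Prop :=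
  symmetric e /\ irreflexive e.

Fixpoint ball (T : finType) (e : rel T) (x : T) (k : nat) : {set T} :=
  match k with
  | 0 => [set x]
  | k'.+1 => ball e x k' :|: [set y | [exists z in ball e x k', e z y]]
  end.

Definition connected_graph (T : finType) (e : rel T) : Prop :=
  forall x y : T, connect e x y.

(* Shortest-path distance: the least k with y in the k-ball of x
   (meaningful for connected graphs, where it is < #|T|). *)
Definition dist (T : finType) (e : rel T) (x y : T) : nat :=
  find (fun k => y \in ball e x k) (iota 0 #|T|).

Definition between (T : finType) (e : rel T) (a b c : T) : bool :=
  dist e a b + dist e b c == dist e a c.

Definition on_common_geodesic (T : finType) (e : rel T) (u v w : T) : bool :=
  [&& u != v, v != w, u != w &
      [|| between e v u w, between e u v w | between e u w v]].

Definition gp_set (T : finType) (e : rel T) (S : {set T}) : bool :=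
  [forall u in S, forall v in S, forall w in S, ~~ on_common_geodesic e u v w].

Definition gp (T : finType) (e : rel T) : nat :=
  \max_(S : {set T} | gp_set e S) #|S|.

Definition max_distant (T : finType) (e : rel T) (u v : T) : bool :=
  [forall w, e u w ==> (dist e v w <= dist e u v)].

Definition mmd (T : finType) (e : rel T) (u v : T) : bool :=
  max_distant e u v && max_distant e v u.

Definition sr_rel (T : finType) (e : rel T) : rel T :=
  fun u v => (u != v) && mmd e u v.

Definition is_clique (T : finType) (r : rel T) (S : {set T}) : bool :=
  [forall u in S, forall v in S, (u != v) ==> r u v].

Definition clique_number (T : finType) (r : rel T) : nat :=
  \max_(S : {set T} | is_clique r S) #|S|.

(* Main.v *)
Require Import Defs.
From mathcomp Require Import all_boot.
Set Implicit Arguments. Unset Strict Implicit. Unset Printing Implicit Defensive.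

Definition VT (r k : nat) := ('I_r.+2 * 'I_k.+2)%type.
Definition E (r k : nat) : rel (VT r k) := fun x y => x.1 != y.1.

Definition op (n : nat) (i : 'I_n.+2) : 'I_n.+2 := if i == ord0 then ord_max else ord0.
Lemma opP n (i : 'I_n.+2) : op i != i.
Proof. rewrite /op; case: (i =P ord0) => [->|/eqP h] //; by rewrite eq_sym. Qed.

Lemma in_ball0 r k (x y : VT r k) : (y \in ball (@E r k) x 0) = (y == x).
Proof. by rewrite /= in_set1. Qed.

Lemma in_ball1 r k (x y : VT r k) : (y \in ball (@E r k) x 1) = (y == x) || (x.1 != y.1).
Proof.
rewrite /= in_setU in_set1 in_set; congr orb.
apply/existsP/idP => [[z /andP[]]|h]; first by rewrite in_set1 => /eqP ->.
by exists x; rewrite in_set1 eqxx.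
Qed.

Lemma in_ball2 r k (x y : VT r k) : (y \in ball (@E r k) x 2).
Proof.
rewrite [ball _ _ 2]/= in_setU in_set; apply/orP.
case h: (x.1 != y.1); first by left; rewrite in_ball1 h orbT.
right; apply/existsP; exists (op y.1, y.2); rewrite in_ball1 /E /=.
move/negbFE: h => /eqP ->; idtac.
by rewrite opP andbT (eq_sym y.1) opP orbT.
Qed.

Lemma dist_eq r k (x y : VT r k) :
  dist (@E r k) x y = if x == y then 0 else if x.1 == y.1 then 2 else 1.
Proof.
rewrite /dist card_prod !card_ord.
have h4 : 4 <= r.+2 * k.+2 by apply: (@leq_mul 2 2)...
case Hn: (r.+2 * k.+2) h4 => [|[|[|[|n]]]] // _.
rewrite /= in_ball0 in_ball1 in_ball2 (eq_sym y x).
by case: (x == y); case: (x.1 == y.1).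
Qed.

Lemma mmd_eq r k (u v : VT r k) : u != v -> mmd (@E r k) u v = (u.1 == v.1).
Proof.
move=> uv.
have md : forall a b : VT r k, a != b -> max_distant (@E r k) a b = (a.1 == b.1).
  move=> a b ab; rewrite /max_distant dist_eq (negbTE ab).
  case: eqP => [ab1|/eqP ab1].
    apply/forallP => w; apply/implyP => _; rewrite dist_eq.
    by case: ifP => // _; case: ifP.
  apply/negbTE/negP => /forallP /(_ (b.1, op b.2)) /implyP.
  rewrite /E /= ab1 => /(_ isT); rewrite dist_eq /=.
  case: eqP => [hb|_]; first by move: (opP b.2); rewrite {2}hb eqxx.
  by rewrite eqxx.
rewrite /mmd md // md 1?eq_sym //.
by case: (u.1 =P v.1) => [->|]; rewrite ?eqxx ?andbb //= andbF.
Qed.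

Lemma between_diff r k (a b c : VT r k) :
  a.1 != b.1 -> b.1 != c.1 -> a.1 != c.1 -> between (@E r k) a b c = false.
Proof.
move=> ab bc ac; rewrite /between !dist_eq.
have ne : forall x y : VT r k, x.1 != y.1 -> x == y = false.
  by move=> x y; apply: contraNF => /eqP ->.
by rewrite !ne // (negbTE ab) (negbTE bc) (negbTE ac).
Qed.

Lemma part_card r k (a : 'I_r.+2) (S : {set VT r k}) :
  S \subset [set x | x.1 == a] -> #|S| <= k.+2.
Proof.
move=> sub.
have : S \subset [set (a, j) | j in [set: 'I_k.+2]].
  apply/subsetP => x /(subsetP sub); rewrite in_set => /eqP xa.
  apply/imsetP; exists x.2; first by rewrite in_setT.
  by case: x xa => /= ? ? ->.
move/subset_leq_card/leq_trans; apply.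
by rewrite (leq_trans (leq_imset_card _ _)) // cardsT card_ord.
Qed.

Lemma gp_eq r k : k <= r -> gp (@E r k) = r.+2.
Proof.
move=> kr; apply/eqP; rewrite eqn_leq; apply/andP; split.
  apply/bigmax_leqP => S gpS.
  case: (boolP [forall u in S, forall v in S, (u.1 == v.1) ==> (u == v)]).
    move=> /forallP inj.
    have inj' : {in S &, injective (fun x : VT r k => x.1)}.
      move=> u v uS vS /eqP h.
      by move: (inj u); rewrite uS /= => /forallP /(_ v); rewrite vS h /= => /eqP.
    rewrite -(card_in_imset inj').
    by rewrite (leq_trans (subset_leq_card (subsetT _))) // cardsT card_ord.
  rewrite negb_forall => /existsP [u]; rewrite negb_imply => /andP [uS].
  rewrite negb_forall => /existsP [v]; rewrite negb_imply => /andP [vS].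
  rewrite negb_imply => /andP [/eqP uv1 uv].
  apply: (leq_trans (@part_card r k u.1 S _)); last by [].
  apply/subsetP => w wS; rewrite in_set; apply/negPn/negP => wu.
  move/forallP: gpS => /(_ u); rewrite uS /= => /forallP /(_ w); rewrite wS /=.
  move=> /forallP /(_ v); rewrite vS /= /on_common_geodesic.
  have wu' : u != w by apply: contraNneq wu => ->.
  have wv' : w != v by apply: contraNneq wu => ->; rewrite uv1.
  rewrite wu' wv' uv /= /between !dist_eq (negbTE wu') (negbTE wv') (negbTE uv).
  have h1 : (u.1 == w.1) = false by rewrite eq_sym (negbTE wu).
  have h2 : (w.1 == v.1) = false by rewrite -uv1 (negbTE wu).
  have h3 : (u.1 == v.1) = true by rewrite uv1 eqxx.
  by rewrite h1 h2 h3 /= orbT.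
set S0 := [set (i, @ord0 k.+1) | i in [set: 'I_r.+2]].
have cS0 : #|S0| = r.+2.
  rewrite card_in_imset ?cardsT ?card_ord //.
  by move=> i j _ _ [].
apply: (@leq_trans #|S0|); first by rewrite cS0.
apply: leq_bigmax_cond.
apply/forallP => u; apply/implyP => /imsetP [i _ ->].
apply/forallP => v; apply/implyP => /imsetP [j _ ->].
apply/forallP => w; apply/implyP => /imsetP [l _ ->].
rewrite /on_common_geodesic.
case: (i =P j) => [->|/eqP ij]; first by rewrite eqxx.
case: (j =P l) => [->|/eqP jl]; first by rewrite eqxx andbF.
case: (i =P l) => [->|/eqP il]; first by rewrite eqxx !andbF.
by rewrite !between_diff /= 1?eq_sym ?andbF // 1?eq_sym.
Qed.

Lemma clique_eq r k : clique_number (sr_rel (@E r k)) = k.+2.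
Proof.
have sr : forall u v : VT r k, sr_rel (@E r k) u v = (u != v) && (u.1 == v.1).
  move=> u v; rewrite /sr_rel; case: (boolP (u != v)) => //= uv.
  by rewrite mmd_eq.
apply/eqP; rewrite eqn_leq; apply/andP; split.
  apply/bigmax_leqP => S clS.
  case: (set_0Vmem S) => [->|[u uS]]; first by rewrite cards0.
  apply: (@part_card r k u.1).
  apply/subsetP => w wS; rewrite in_set.
  case: (boolP (u == w)) => [/eqP -> //|uw].
  move/forallP: clS => /(_ u); rewrite uS /= => /forallP /(_ w).
  by rewrite wS uw /= => h; move: (sr u w); rewrite h => /esym/andP[_ /eqP->].
set S0 := [set (@ord0 r.+1, j) | j in [set: 'I_k.+2]].
have cS0 : #|S0| = k.+2.
  rewrite card_in_imset ?cardsT ?card_ord //.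
  by move=> i j _ _ [].
apply: (@leq_trans #|S0|); first by rewrite cS0.
apply: leq_bigmax_cond.
apply/forallP => u; apply/implyP => /imsetP [i _ ->].
apply/forallP => v; apply/implyP => /imsetP [j _ ->].
by apply/implyP => ij; rewrite sr ij /=.
Qed.

Theorem proposition3p5 (r t : nat) :
  2 <= t -> t <= r ->
  exists (T : finType) (e : rel T),
    simple_graph e /\ connected_graph e /\
    gp e = r /\ clique_number (sr_rel e) = t.
Proof.
case: t => [|[|k]] // _; case: r => [|[|r]] // kr.
exists (VT r k), (@E r k); split; last split; last split.
- split; first by move=> x y; rewrite /E eq_sym.
  by move=> x; rewrite /E eqxx.
- move=> x y; case: (boolP (x.1 != y.1)) => h; first exact: connect1.
  apply: (@connect_trans _ _ (op x.1, x.2)); apply: connect1.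
    by rewrite /E /= eq_sym opP.
  by move/negbNE: h => /eqP h; rewrite /E /= -h opP.
- exact: gp_eq.
- exact: clique_eq.
Qed.
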